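(* Let $B\ge0$, $L\ge2$, let $\Lambda\subset\mathbb{Z}$ be a finite set containing $\{1,\dots,L\}$ and let $\alpha=(\alpha_x)_{x\in\Lambda}$ take values in $[-B,B]$. Let $\mu$ be a Bernoulli measure on $\{0,1\}^\Lambda$ with external field $\alpha$, i.e. either the product measure with $\mu(\eta_x=1)=e^{\alpha_x+\lambda}/(1+e^{\alpha_x+\lambda})$ for some $\lambda\in\mathbb{R}$, or the measure proportional to $\exp\{\sum_{x\in\Lambda}\alpha_x\eta_x\}$ on configurations with a fixed number of particles. Then for every $f:\{0,1\}^\Lambda\to\mathbb{R}$, $$\int[f(T_{1L}\eta)-f(\eta)]^2d\mu(\eta)\le e^{13B}L\sum_{1\le x\le L-1}\int(\nabla_{x,x+1}f)^2d\mu(\eta).$$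
   Context: $T_{xy}\eta$ denotes $\eta$ with the occupations at $x$ and $y$ exchanged, and $\nabla_{xy}f(\eta)=f(T_{xy}\eta)-f(\eta)$. *)

(* Defs.v *)
From HB Require Import structures.
From mathcomp Require Import all_boot all_order all_algebra.
From mathcomp Require Import finmap.
From mathcomp Require Import reals.
From mathcomp Require Import sequences exp.
Set Implicit Arguments. Unset Strict Implicit. Unset Printing Implicit Defensive.
Import Order.TTheory GRing.Theory Num.Theory.
Local Open Scope ring_scope.
Local Open Scope fset_scope.

(* Lattice Λ : a finite set of integers; configurations η ∈ {0,1}^Λ
   are finite functions Λ -> bool (true = occupied). *)
Definition config (Lam : {fset int}) := {ffun Lam -> bool}.

(* T_{xy} η : exchange the occupations at the integer sites x and y.
   (Only meaningful when x, y ∈ Λ, which is guaranteed in the theorem.) *)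
Definition swapZ (Lam : {fset int}) (x y : int) (eta : config Lam) : config Lam :=
  [ffun z : Lam =>
     let w := if val z == x then y else if val z == y then x else val z in
     match insub w : option Lam with Some w' => eta w' | None => eta z end].

Definition nparticles (Lam : {fset int}) (eta : config Lam) : nat :=
  \sum_(z : Lam) (eta z : nat).

Definition bern_prod {R : realType} (Lam : {fset int}) (alpha : Lam -> R) (lam : R)
  (eta : config Lam) : R :=
  \prod_(z : Lam)
    (let p := expR (alpha z + lam) / (1 + expR (alpha z + lam)) in
     if eta z then p else 1 - p).

Definition gibbs_weight {R : realType} (Lam : {fset int}) (alpha : Lam -> R)
  (eta : config Lam) : R :=
  expR (\sum_(z : Lam) alpha z * (eta z)%:R).

Definition bern_canon {R : realType} (Lam : {fset int}) (alpha : Lam -> R) (k : nat)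
  (eta : config Lam) : R :=
  if nparticles eta == k then
    gibbs_weight alpha eta /
      \sum_(xi : config Lam | nparticles xi == k) gibbs_weight alpha xi
  else 0.

Definition bernoulli_measure {R : realType} (Lam : {fset int}) (alpha : Lam -> R)
  (mu : config Lam -> R) : Prop :=
  (exists lam : R, mu = bern_prod alpha lam) \/
  (exists k : nat, (k <= #|{: Lam}|)%N /\ mu = bern_canon alpha k).

Definition integ {R : realType} (Lam : {fset int}) (mu : config Lam -> R)
  (g : config Lam -> R) : R :=
  \sum_(eta : config Lam) mu eta * g eta.

(* Main.v *)
Require Import Defs.
From HB Require Import structures.
From mathcomp Require Import all_boot all_order all_algebra.
From mathcomp Require Import finmap.
From mathcomp Require Import reals.
From mathcomp Require Import sequences exp.
From mathcomp Require Import ring lra zify.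
Import Order.TTheory GRing.Theory Num.Theory.
Local Open Scope ring_scope.
Local Open Scope fset_scope.
Local Close Scope fset_scope.
Set Implicit Arguments. Unset Strict Implicit. Unset Printing Implicit Defensive.
Definition sw (Lam : {fset int}) (x y : int) (z : Lam) : Lam :=
  let w := if val z == x then y else if val z == y then x else val z in
  match (insub w : option Lam) with Some w' => w' | None => z end.

Lemma swapZE (Lam : {fset int}) x y (eta : config Lam) :
  swapZ x y eta = [ffun z => eta (sw x y z)].
Proof. by apply/ffunP => z; rewrite !ffunE /sw /=; case: insub. Qed.

Lemma sw_val (Lam : {fset int}) (a b : Lam) (z : Lam) :
  val (sw (val a) (val b) z) =
  if val z == val a then val b else if val z == val b then val a else val z.
Proof.
rewrite /sw /=; case: insubP => [u _ -> //|].
by case: ifP => _; [rewrite (valP b)|case: ifP => _; rewrite ?(valP a) ?(valP z)].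
Qed.

Lemma sw_l (Lam : {fset int}) (a b : Lam) : sw (val a) (val b) a = b.
Proof. by apply: val_inj; rewrite sw_val eqxx. Qed.

Lemma sw_r (Lam : {fset int}) (a b : Lam) : sw (val a) (val b) b = a.
Proof.
apply: val_inj; rewrite sw_val eqxx; case: eqP => // /val_inj ->; done.
Qed.

Lemma sw_o (Lam : {fset int}) (a b z : Lam) : z != a -> z != b ->
  sw (val a) (val b) z = z.
Proof.
by move=> za zb; apply: val_inj; rewrite sw_val (inj_eq val_inj) (negbTE za)
  (inj_eq val_inj) (negbTE zb).
Qed.

Lemma sw_invol (Lam : {fset int}) (a b : Lam) : involutive (@sw Lam (val a) (val b)).
Proof.
move=> z; have [->|za] := eqVneq z a; first by rewrite sw_l sw_r.
have [->|zb] := eqVneq z b; first by rewrite sw_r sw_l.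
by rewrite !sw_o.
Qed.

Lemma sum_invol (R : realType) (T : finType) (h : T -> T) (F : T -> R) :
  involutive h -> \sum_i F (h i) = \sum_i F i.
Proof. by move=> hK; rewrite [RHS](reindex_inj (inv_inj hK)). Qed.

Lemma sumn_invol (T : finType) (h : T -> T) (F : T -> nat) :
  involutive h -> (\sum_i F (h i) = \sum_i F i)%N.
Proof. by move=> hK; rewrite [RHS](reindex_inj (inv_inj hK)). Qed.

Lemma swapZK (Lam : {fset int}) (a b : Lam) :
  involutive (@swapZ Lam (val a) (val b)).
Proof. by move=> e; apply/ffunP => z; rewrite !swapZE !ffunE sw_invol. Qed.

Lemma swapZ_at_l (Lam : {fset int}) (a b : Lam) (e : config Lam) :
  swapZ (val a) (val b) e a = e b.
Proof. by rewrite swapZE ffunE sw_l. Qed.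
Lemma swapZ_at_r (Lam : {fset int}) (a b : Lam) (e : config Lam) :
  swapZ (val a) (val b) e b = e a.
Proof. by rewrite swapZE ffunE sw_r. Qed.
Lemma swapZ_at_o (Lam : {fset int}) (a b z : Lam) (e : config Lam) :
  z != a -> z != b -> swapZ (val a) (val b) e z = e z.
Proof. by move=> za zb; rewrite swapZE ffunE sw_o. Qed.

Lemma swapZ_id (Lam : {fset int}) (a b : Lam) (e : config Lam) :
  e a = e b -> swapZ (val a) (val b) e = e.
Proof.
move=> eab; apply/ffunP => z; have [->|za] := eqVneq z a.
  by rewrite swapZ_at_l.
have [->|zb] := eqVneq z b; first by rewrite swapZ_at_r.
by rewrite swapZ_at_o.
Qed.

Lemma swapZ_dec1 (Lam : {fset int}) (a m b : Lam) (e : config Lam) :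
  a != m -> m != b -> a != b -> e m = e b ->
  swapZ (val a) (val b) e = swapZ (val m) (val b) (swapZ (val a) (val m) e).
Proof.
move=> am mb ab emb; apply/ffunP => z; rewrite !swapZE !ffunE.
have ma : m != a by rewrite eq_sym.
have bm : b != m by rewrite eq_sym.
have ba : b != a by rewrite eq_sym.
have [->|za] := eqVneq z a; first by rewrite sw_l (sw_o am ab) sw_l.
have [->|zm] := eqVneq z m; first by rewrite (sw_o ma mb) sw_l (sw_o ba bm).
have [->|zb] := eqVneq z b; first by rewrite !sw_r.
by rewrite !sw_o.
Qed.

Lemma swapZ_dec2 (Lam : {fset int}) (a m b : Lam) (e : config Lam) :
  a != m -> m != b -> a != b -> e m = e a ->
  swapZ (val a) (val b) e = swapZ (val a) (val m) (swapZ (val m) (val b) e).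
Proof.
move=> am mb ab ema; apply/ffunP => z; rewrite !swapZE !ffunE.
have ma : m != a by rewrite eq_sym.
have bm : b != m by rewrite eq_sym.
have ba : b != a by rewrite eq_sym.
have [->|za] := eqVneq z a; first by rewrite !sw_l.
have [->|zm] := eqVneq z m; first by rewrite (sw_o ma mb) sw_r (sw_o am ab).
have [->|zb] := eqVneq z b; first by rewrite sw_r (sw_o ba bm) sw_r.
by rewrite !sw_o.
Qed.

Definition en (R : realType) (Lam : {fset int}) (be : Lam -> R) (e : config Lam) : R :=
  \sum_z be z * (e z)%:R.
Definition wt (R : realType) (Lam : {fset int}) (H : nat -> R) (be : Lam -> R)
  (e : config Lam) : R := expR (en be e) * H (nparticles e).
Definition A (R : realType) (Lam : {fset int}) (H : nat -> R) (be : Lam -> R)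
  (f : config Lam -> R) (x y : int) : R :=
  \sum_e wt H be e * (f (swapZ x y e) - f e) ^+ 2.
Definition bsw (R : realType) (Lam : {fset int}) (be : Lam -> R) (a b : Lam) : Lam -> R :=
  fun z => be (sw (val a) (val b) z).

Lemma np_swap (Lam : {fset int}) (a b : Lam) (e : config Lam) :
  nparticles (swapZ (val a) (val b) e) = nparticles e.
Proof.
rewrite /nparticles swapZE; under eq_bigr do rewrite ffunE.
exact: (sumn_invol (fun z => nat_of_bool (e z)) (sw_invol a b)).
Qed.

Lemma en_swap (R : realType) (Lam : {fset int}) (be : Lam -> R) (a b : Lam)
  (e : config Lam) : en be (swapZ (val a) (val b) e) = en (bsw be a b) e.
Proof.
rewrite /en swapZE; under eq_bigr do rewrite ffunE.
rewrite -(sum_invol (fun z => bsw be a b z * (e z)%:R) (sw_invol a b)).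
by apply: eq_bigr => z _; rewrite /bsw sw_invol.
Qed.

Lemma wt_swap (R : realType) (Lam : {fset int}) (H : nat -> R) (be : Lam -> R)
  (a b : Lam) (e : config Lam) :
  wt H be (swapZ (val a) (val b) e) = wt H (bsw be a b) e.
Proof. by rewrite /wt en_swap np_swap. Qed.

Lemma wt_ge0 (R : realType) (Lam : {fset int}) (H : nat -> R) (be : Lam -> R)
  (e : config Lam) : (forall n, 0 <= H n) -> 0 <= wt H be e.
Proof. by move=> hH; rewrite /wt mulr_ge0 ?expR_ge0. Qed.

Lemma sq_split (R : realType) (u v p q : R) : 0 < p -> 0 < q ->
  (u + v) ^+ 2 <= (p + q) / p * u ^+ 2 + (p + q) / q * v ^+ 2.
Proof.
move=> hp hq.
have -> : (p + q) / p * u ^+ 2 + (p + q) / q * v ^+ 2 =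
          (u + v) ^+ 2 + (q * u - p * v) ^+ 2 / (p * q).
  by field; rewrite ?gt_eqF ?mulr_gt0.
by rewrite lerDl divr_ge0 ?sqr_ge0 // mulr_ge0 // ltW.
Qed.

Lemma rec_step (R : realType) (Lam : {fset int}) (H : nat -> R) (be : Lam -> R)
  (f : config Lam -> R) (a m b : Lam) (p q : R) :
  a != m -> m != b -> a != b -> 0 < p -> 0 < q -> (forall n, 0 <= H n) ->
  A H be f (val a) (val b) <=
  (p + q) / p * A H (bsw be m b) f (val a) (val m) +
  (p + q) / q * A H (bsw be a m) f (val m) (val b).
Proof.
move=> am mb ab hp hq hH.
pose ga := fun e : config Lam => if e m == e b then
    f (swapZ (val a) (val m) e) - f e
  else f (swapZ (val a) (val m) (swapZ (val m) (val b) e)) - f (swapZ (val m) (val b) e).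
pose gc := fun e : config Lam => if e m == e a then
    f (swapZ (val m) (val b) e) - f e
  else f (swapZ (val m) (val b) (swapZ (val a) (val m) e)) - f (swapZ (val a) (val m) e).
have h1 : A H be f (val a) (val b) <= \sum_e ((p + q) / p * (wt H be e * ga e ^+ 2) +
                                             (p + q) / q * (wt H be e * gc e ^+ 2)).
  rewrite /A; apply: ler_sum => e _.
  have hw := wt_ge0 be e hH.
  have hpq : 0 <= p + q by rewrite addr_ge0 // ltW.
  have [eab|eab] := eqVneq (e a) (e b).
    rewrite swapZ_id // subrr expr2 mulr0 mulr0.
    have hp0 := ltW hp; have hq0 := ltW hq.
    by apply: addr_ge0; apply: mulr_ge0;
      [exact: divr_ge0 | exact: mulr_ge0 hw (sqr_ge0 _) |
       exact: divr_ge0 | exact: mulr_ge0 hw (sqr_ge0 _)].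
  have key : f (swapZ (val a) (val b) e) - f e = ga e + gc e.
    rewrite /ga /gc; have [emb|emb] := eqVneq (e m) (e b).
      have -> : (e m == e a) = false.
        by apply/negbTE; rewrite emb eq_sym.
      rewrite (swapZ_dec1 am mb ab emb); ring.
    have ema : e m = e a.
      by move: eab emb; case: (e m); case: (e a); case: (e b).
    rewrite ema eqxx (swapZ_dec2 am mb ab ema); ring.
  rewrite key [X in _ <= X](_ : _ = wt H be e *
     ((p + q) / p * ga e ^+ 2 + (p + q) / q * gc e ^+ 2)); last by ring.
  have h := ler_wpM2l hw (sq_split (ga e) (gc e) hp hq); exact: h.
have Ea : \sum_e wt H be e * ga e ^+ 2 = A H (bsw be m b) f (val a) (val m).
  pose phi := fun e : config Lam => if e m == e b then e else swapZ (val m) (val b) e.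
  have phiK : involutive phi.
    move=> e; rewrite /phi; cbv beta; have [emb|hne] := eqVneq (e m) (e b).
      by rewrite ?emb ?eqxx.
    by rewrite ?(negbTE hne) swapZ_at_l swapZ_at_r eq_sym (negbTE hne) swapZK.
  rewrite /A -[X in _ = X](sum_invol _ phiK); apply: eq_bigr => e _.
  rewrite /phi /ga; cbv beta; have [emb|emb] := eqVneq (e m) (e b).
    by rewrite ?emb ?eqxx -wt_swap (swapZ_id emb).
  by rewrite ?(negbTE emb) -wt_swap swapZK.
have Ec : \sum_e wt H be e * gc e ^+ 2 = A H (bsw be a m) f (val m) (val b).
  pose phi := fun e : config Lam => if e m == e a then e else swapZ (val a) (val m) e.
  have phiK : involutive phi.
    move=> e; rewrite /phi; cbv beta; have [ema|hne] := eqVneq (e m) (e a).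
      by rewrite ?ema ?eqxx.
    by rewrite ?(negbTE hne) swapZ_at_l swapZ_at_r eq_sym (negbTE hne) swapZK.
  rewrite /A -[X in _ = X](sum_invol _ phiK); apply: eq_bigr => e _.
  rewrite /phi /gc; cbv beta; have [ema|ema] := eqVneq (e m) (e a).
    by rewrite ?ema ?eqxx -wt_swap (swapZ_id (esym ema)).
  by rewrite ?(negbTE ema) -wt_swap swapZK.
by move: h1; rewrite big_split /= -!mulr_sumr Ea Ec.
Qed.

Definition at_ (R : realType) (Lam : {fset int}) (be : Lam -> R) (x : nat) : R :=
  match (insub x%:Z : option Lam) with Some z => be z | None => 0 end.

Lemma at_val (R : realType) (Lam : {fset int}) (be : Lam -> R) (z : Lam) (x : nat) :
  val z = x%:Z -> at_ be x = be z.
Proof. by move=> hz; rewrite /at_ -hz valK. Qed.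

Lemma argmax_ex (R : realType) (g : nat -> R) (l r : nat) : (l.+1 < r)%N ->
  exists m, [/\ (l < m)%N, (m < r)%N &
    forall x, (l < x)%N -> (x < r)%N -> g x <= g m].
Proof.
elim: r => // r IH hr.
case: (ltnP l.+1 r) => h.
  have [m [h1 h2 h3]] := IH h.
  case: (lerP (g m) (g r)) => hg.
    exists r; split => //.
    move=> x hx1 hx2; case: (ltnP x r) => [xr|rx].
      exact: le_trans (h3 x hx1 xr) hg.
    by have -> : x = r by apply/eqP; rewrite eqn_leq rx -ltnS hx2.
  exists m; split => //; try exact: ltn_trans h2 (ltnSn r).
  move=> x hx1 hx2; case: (ltnP x r) => [xr|rx]; first exact: h3.
  have -> : x = r by apply/eqP; rewrite eqn_leq rx -ltnS hx2.
  exact: ltW.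
have er : r = l.+1 by apply/eqP; rewrite eqn_leq h -ltnS hr.
exists r; rewrite er; split => // x hx1 hx2.
by have -> : x = l.+1 by apply/eqP; rewrite eqn_leq -ltnS hx2 hx1.
Qed.

Definition Inv (R : realType) (Lam : {fset int}) (B : R) (L : nat) (al be : Lam -> R)
  (l r : nat) (zl zr : Lam) : Prop :=
  [/\ forall z, `|be z| <= B,
      forall x, (l < x)%N -> (x < r)%N -> at_ be x = at_ al x,
      l = 1%N \/ (forall x, (l < x)%N -> (x < r)%N -> at_ al x <= al zl),
      r = L \/ (forall x, (l < x)%N -> (x < r)%N -> at_ al x <= al zr) &
      forall xi : config Lam, \sum_z (be z - al z) * (xi z)%:R <=
        (if l == 1%N then 0 else 2 * B) + (if r == L then 0 else 2 * B) +
        (be zr - al zr) * (xi zr)%:R + (be zl - al zl) * (xi zl)%:R].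

Lemma sum_swap_diff (R : realType) (Lam : {fset int}) (ga g : Lam -> R) (a b : Lam) :
  a != b ->
  \sum_z ga (sw (val a) (val b) z) * g z =
  \sum_z ga z * g z + (ga b - ga a) * (g a - g b).
Proof.
move=> ab.
rewrite -(sum_invol (fun z => ga (sw (val a) (val b) z) * g z) (sw_invol a b)).
under eq_bigr do rewrite sw_invol.
have E : forall F : Lam -> R,
    \sum_z F z = F a + F b + \sum_(z | (z != a) && (z != b)) F z.
  move=> F; rewrite (bigD1 a) //= (bigD1 (P := fun z => z != a) b) 1?eq_sym //=.
  by rewrite addrA.
rewrite (E (fun z => ga z * g (sw (val a) (val b) z))) (E (fun z => ga z * g z)) /=.
rewrite sw_l sw_r.
have -> : \sum_(z | (z != a) && (z != b)) ga z * g (sw (val a) (val b) z) =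
          \sum_(z | (z != a) && (z != b)) ga z * g z.
  by apply: eq_bigr => z /andP [za zb]; rewrite sw_o.
ring.
Qed.

Lemma sum_diff (R : realType) (Lam : {fset int}) (F G x : Lam -> R) :
  \sum_z (F z - G z) * x z = \sum_z F z * x z - \sum_z G z * x z.
Proof. by rewrite -sumrB; apply: eq_bigr => z _; rewrite mulrBl. Qed.

Lemma diff_bnd (R : realType) (B u v : R) (b : bool) :
  `|u| <= B -> `|v| <= B -> (u - v) * b%:R <= 2 * B.
Proof.
move=> hu hv; have hB : 0 <= B by apply: le_trans hv.
move: hu hv; rewrite !ler_norml => /andP [u1 u2] /andP [v1 v2].
by case: b; rewrite ?mulr1 ?mulr0; lra.
Qed.

Lemma neq_site (Lam : {fset int}) (z w : Lam) (x y : nat) :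
  val z = x%:Z -> val w = y%:Z -> x != y -> z != w.
Proof.
move=> hz hw xy; apply/eqP => zw; move: xy; rewrite zw hw in hz.
by case: hz => ->; rewrite eqxx.
Qed.

Lemma natb01 (R : realType) (b : bool) : 0 <= (b%:R : R) /\ (b%:R : R) <= 1.
Proof. by case: b; split; rewrite ?ler01 ?lexx. Qed.

Lemma inv_left (R : realType) (B : R) (L : nat) (Lam : {fset int}) (al be : Lam -> R)
  (l m r : nat) (zl zm zr : Lam) :
  (forall z, `|al z| <= B) -> (forall x, (1 <= x <= L)%N -> x%:Z \in Lam) ->
  (1 <= l)%N -> (l < m)%N -> (m < r)%N -> (r <= L)%N ->
  val zl = l%:Z -> val zm = m%:Z -> val zr = r%:Z ->
  (forall x, (l < x)%N -> (x < r)%N -> at_ al x <= al zm) ->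
  Inv B L al be l r zl zr -> Inv B L al (bsw be zm zr) l m zl zm.
Proof.
move=> hal hLam h1l hlm hmr hrL hzl hzm hzr hmax [ha hb hcl hcr hd].
have lm : l != m by rewrite neq_ltn hlm.
have mr : m != r by rewrite neq_ltn hmr.
have lr : l != r by rewrite neq_ltn (ltn_trans hlm hmr).
have zlm := neq_site hzl hzm lm; have zmr := neq_site hzm hzr mr.
have zlr := neq_site hzl hzr lr.
have ebm : be zm = al zm.
  by rewrite -(at_val be hzm) -(at_val al hzm) hb.
split.
- by move=> z; rewrite /bsw ha.
- move=> x hx1 hx2.
  have hxL : (1 <= x <= L)%N.
    by rewrite (leq_trans h1l (ltnW hx1)) /= (leq_trans (ltnW (ltn_trans hx2 hmr)) hrL).
  have [zx hzx] : exists zx : Lam, val zx = x%:Z.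
    by exists [` hLam x hxL]%fset.
  have xm : x != m by rewrite neq_ltn hx2.
  have xr : x != r by rewrite neq_ltn (ltn_trans hx2 hmr).
  rewrite (at_val _ hzx) /bsw sw_o ?(neq_site hzx hzm) ?(neq_site hzx hzr) //.
  by rewrite -(at_val be hzx) hb // (ltn_trans hx2 hmr).
- case: hcl => [->|hcl]; [by left|right] => x hx1 hx2.
  by apply: hcl => //; apply: ltn_trans hx2 hmr.
- right => x hx1 hx2; apply: hmax => //; apply: ltn_trans hx2 hmr.
move=> xi.
have hmL : (m == L) = false by apply/negbTE; rewrite neq_ltn (leq_trans hmr hrL).
rewrite hmL /bsw sw_l (sw_o zlm zlr).
rewrite (sum_diff (fun z => be (sw (val zm) (val zr) z)) al (fun z => (xi z)%:R)).
rewrite (sum_swap_diff be (fun z => (xi z)%:R) zmr) ebm.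
have := hd xi; rewrite sum_diff => hd'.
have extra : (if r == L then 0 else 2 * B) + (al zm - al zr) * (xi zr)%:R <= 2 * B.
  case: eqP => [_|/eqP rL].
    by rewrite add0r; apply: diff_bnd.
  case: hcr => [/eqP|hcr]; first by rewrite (negbTE rL).
  have : al zm <= al zr by rewrite -(at_val al hzm) hcr.
  have [x0 x1] := natb01 R (xi zr).
  move=> h; have : (al zm - al zr) * (xi zr)%:R <= 0.
    by rewrite mulr_le0_ge0 // subr_le0.
  lra.
move: hd' extra.
set Sb := \sum_z be z * _; set Sa := \sum_z al z * _.
set cl := (if l == 1%N then _ else _); set cr := (if r == L then _ else _).
set Xm := (xi zm)%:R; set Xr := (xi zr)%:R; set Xl := (xi zl)%:R.
move=> h1 h2.
have -> : Sb + (be zr - al zm) * (Xm - Xr) - Sa =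
          (Sb - Sa) + (be zr - al zm) * Xm - (be zr - al zm) * Xr by ring.
have E : (be zr - al zr) * Xr - (be zr - al zm) * Xr = (al zm - al zr) * Xr by ring.
move: h1 h2 E.
move: ((be zr - al zr) * Xr) ((be zr - al zm) * Xr) ((al zm - al zr) * Xr)
  ((be zr - al zm) * Xm) ((be zl - al zl) * Xl) => U V W Y Z.
lra.
Qed.

Lemma inv_right (R : realType) (B : R) (L : nat) (Lam : {fset int}) (al be : Lam -> R)
  (l m r : nat) (zl zm zr : Lam) :
  (forall z, `|al z| <= B) -> (forall x, (1 <= x <= L)%N -> x%:Z \in Lam) ->
  (1 <= l)%N -> (l < m)%N -> (m < r)%N -> (r <= L)%N ->
  val zl = l%:Z -> val zm = m%:Z -> val zr = r%:Z ->
  (forall x, (l < x)%N -> (x < r)%N -> at_ al x <= al zm) ->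
  Inv B L al be l r zl zr -> Inv B L al (bsw be zl zm) m r zm zr.
Proof.
move=> hal hLam h1l hlm hmr hrL hzl hzm hzr hmax [ha hb hcl hcr hd].
have lm : l != m by rewrite neq_ltn hlm.
have mr : m != r by rewrite neq_ltn hmr.
have lr : l != r by rewrite neq_ltn (ltn_trans hlm hmr).
have zlm := neq_site hzl hzm lm; have zmr := neq_site hzm hzr mr.
have zlr := neq_site hzl hzr lr.
have zrl : zr != zl by rewrite eq_sym.
have zrm : zr != zm by rewrite eq_sym.
have ebm : be zm = al zm.
  by rewrite -(at_val be hzm) -(at_val al hzm) hb.
split.
- by move=> z; rewrite /bsw ha.
- move=> x hx1 hx2.
  have hlx := ltn_trans hlm hx1.
  have hxL : (1 <= x <= L)%N.
    by rewrite (leq_trans h1l (ltnW hlx)) /= (leq_trans (ltnW hx2) hrL).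
  have [zx hzx] : exists zx : Lam, val zx = x%:Z.
    by exists [` hLam x hxL]%fset.
  have xl : x != l by rewrite neq_ltn hlx orbT.
  have xm : x != m by rewrite neq_ltn hx1 orbT.
  rewrite (at_val _ hzx) /bsw sw_o ?(neq_site hzx hzl) ?(neq_site hzx hzm) //.
  by rewrite -(at_val be hzx) hb.
- right => x hx1 hx2; apply: hmax => //; apply: ltn_trans hlm hx1.
- case: hcr => [->|hcr]; [by left|right] => x hx1 hx2.
  by apply: hcr => //; apply: ltn_trans hlm hx1.
move=> xi.
have hm1 : (m == 1%N) = false.
  by apply/negbTE; rewrite neq_ltn (leq_ltn_trans h1l hlm) orbT.
rewrite hm1 /bsw sw_r (sw_o zrl zrm).
rewrite (sum_diff (fun z => be (sw (val zl) (val zm) z)) al (fun z => (xi z)%:R)).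
rewrite (sum_swap_diff be (fun z => (xi z)%:R) zlm) ebm.
have := hd xi; rewrite sum_diff => hd'.
have extra : (if l == 1%N then 0 else 2 * B) + (al zm - al zl) * (xi zl)%:R <= 2 * B.
  case: eqP => [_|/eqP l1].
    by rewrite add0r; apply: diff_bnd.
  case: hcl => [/eqP|hcl]; first by rewrite (negbTE l1).
  have : al zm <= al zl by rewrite -(at_val al hzm) hcl.
  have [x0 x1] := natb01 R (xi zl).
  move=> h; have : (al zm - al zl) * (xi zl)%:R <= 0.
    by rewrite mulr_le0_ge0 // subr_le0.
  lra.
move: hd' extra.
set Sb := \sum_z be z * _; set Sa := \sum_z al z * _.
set cl := (if l == 1%N then _ else _); set cr := (if r == L then _ else _).
set Xm := (xi zm)%:R; set Xr := (xi zr)%:R; set Xl := (xi zl)%:R.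
move=> h1 h2.
have -> : Sb + (al zm - be zl) * (Xl - Xm) - Sa =
          (Sb - Sa) + (al zm - be zl) * Xl + (be zl - al zm) * Xm by ring.
have E : (be zl - al zl) * Xl + (al zm - be zl) * Xl = (al zm - al zl) * Xl by ring.
move: h1 h2 E.
move: ((be zl - al zl) * Xl) ((al zm - be zl) * Xl) ((al zm - al zl) * Xl)
  ((be zl - al zm) * Xm) ((be zr - al zr) * Xr) => U V W Y Z.
lra.
Qed.

Lemma base_case (R : realType) (B : R) (L : nat) (Lam : {fset int}) (al be : Lam -> R)
  (H : nat -> R) (f : config Lam -> R) (l r : nat) (zl zr : Lam) :
  (forall z, `|al z| <= B) -> (forall n, 0 <= H n) ->
  Inv B L al be l r zl zr ->
  A H be f (l%:Z) (r%:Z) <= expR (8 * B) * A H al f (l%:Z) (r%:Z).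
Proof.
move=> hal hH [ha hb hcl hcr hd].
have hB : 0 <= B by apply: le_trans (normr_ge0 _) (hal zl).
rewrite /A mulr_sumr; apply: ler_sum => e _.
rewrite mulrA; apply: ler_wpM2r; first exact: sqr_ge0.
rewrite /wt mulrA; apply: ler_wpM2r; first exact: hH.
rewrite -expRD ler_expR.
have := hd e; rewrite sum_diff => hd'.
have b1 := diff_bnd (e zr) (ha zr) (hal zr).
have b2 := diff_bnd (e zl) (ha zl) (hal zl).
have c1 : (if l == 1%N then 0 else 2 * B) <= 2 * B by case: ifP => _; lra.
have c2 : (if r == L then 0 else 2 * B) <= 2 * B by case: ifP => _; lra.
move: hd' b1 b2 c1 c2; rewrite /en.
move: (\sum_z be z * _) (\sum_z al z * _) ((be zr - al zr) * _) ((be zl - al zl) * _)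
  (if l == 1%N then _ else _) (if r == L then _ else _) => S1 S2 U V C1 C2.
lra.
Qed.

Lemma main_ind (R : realType) (B : R) (L : nat) (Lam : {fset int}) (al : Lam -> R)
  (H : nat -> R) (f : config Lam -> R) :
  (forall z, `|al z| <= B) -> (forall x, (1 <= x <= L)%N -> x%:Z \in Lam) ->
  (forall n, 0 <= H n) ->
  forall n (l r : nat) (zl zr : Lam) (be : Lam -> R),
  (r - l <= n.+1)%N -> (l < r)%N -> (1 <= l)%N -> (r <= L)%N ->
  val zl = l%:Z -> val zr = r%:Z -> Inv B L al be l r zl zr ->
  A H be f (l%:Z) (r%:Z) <=
  (r - l)%:R * expR (8 * B) * \sum_(l <= b < r) A H al f (b%:Z) (b.+1%:Z).
Proof.
move=> hal hLam hH n; elim: n => [|n IH] l r zl zr be hn hlr h1l hrL hzl hzr hinv.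
  have er : r = l.+1 by lia.
  move: hzr hinv; rewrite er => hzr hinv.
  rewrite big_nat1 subSnn mul1r; exact: base_case hal hH hinv.
have [er|hlr2] := eqVneq r l.+1.
  move: hzr hinv; rewrite er => hzr hinv.
  rewrite big_nat1 subSnn mul1r; exact: base_case hal hH hinv.
have hlr2' : (l.+1 < r)%N by lia.
have [m [hlm hmr hmax]] := argmax_ex (at_ al) hlr2'.
have hmL : (1 <= m <= L)%N by lia.
pose zm : Lam := [` hLam m hmL]%fset.
have hzm : val zm = m%:Z by [].
have hmax' : forall x, (l < x)%N -> (x < r)%N -> at_ al x <= al zm.
  by move=> x h1 h2; rewrite -(at_val al hzm); apply: hmax.
have i1 := inv_left hal hLam h1l hlm hmr hrL hzl hzm hzr hmax' hinv.
have i2 := inv_right hal hLam h1l hlm hmr hrL hzl hzm hzr hmax' hinv.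
have IH1 := IH l m zl zm (bsw be zm zr) ltac:(lia) hlm h1l ltac:(lia) hzl hzm i1.
have IH2 := IH m r zm zr (bsw be zl zm) ltac:(lia) hmr ltac:(lia) hrL hzm hzr i2.
have zlm : zl != zm by apply: (neq_site hzl hzm); rewrite neq_ltn hlm.
have zmr : zm != zr by apply: (neq_site hzm hzr); rewrite neq_ltn hmr.
have zlr : zl != zr by apply: (neq_site hzl hzr); rewrite neq_ltn (ltn_trans hlm hmr).
have hp : 0 < ((m - l)%:R : R) by rewrite ltr0n subn_gt0.
have hq : 0 < ((r - m)%:R : R) by rewrite ltr0n subn_gt0.
have hs := rec_step (H:=H) be f zlm zmr zlr hp hq hH.
rewrite hzl hzr hzm in hs.
apply: le_trans hs _.
rewrite (big_cat_nat _ (n := m)) //=; try exact: ltnW.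
set S1 := \sum_(l <= i < m) _; set S2 := \sum_(m <= i < r) _.
set p := ((m - l)%:R : R); set q := ((r - m)%:R : R).
have hpq : 0 <= (p + q) / p by rewrite divr_ge0 // addr_ge0 // ltW.
have hpq' : 0 <= (p + q) / q by rewrite divr_ge0 // addr_ge0 // ltW.
apply: le_trans (lerD (ler_wpM2l hpq IH1) (ler_wpM2l hpq' IH2)) _.
have -> : ((r - l)%:R : R) = p + q.
  by rewrite /p /q -natrD; congr (_%:R); lia.
rewrite le_eqVlt; apply/orP; left; apply/eqP.
rewrite -/p -/q -/S1 -/S2.
by field; rewrite ?gt_eqF.
Qed.

Lemma A_ge0 (R : realType) (Lam : {fset int}) (H : nat -> R) (be : Lam -> R)
  (f : config Lam -> R) x y : (forall n, 0 <= H n) -> 0 <= A H be f x y.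
Proof. by move=> hH; apply: sumr_ge0 => e _; rewrite mulr_ge0 ?wt_ge0 ?sqr_ge0. Qed.

Lemma bern_wt (R : realType) (Lam : {fset int}) (alpha : Lam -> R) (mu : config Lam -> R) :
  bernoulli_measure alpha mu ->
  exists H : nat -> R, (forall n, 0 <= H n) /\ (forall e, mu e = wt H alpha e).
Proof.
case => [[lam ->]|[k [_ ->]]].
  exists (fun n => expR (lam * n%:R) / \prod_(z : Lam) (1 + expR (alpha z + lam))).
  split.
    move=> n; rewrite divr_ge0 ?expR_ge0 // prodr_ge0 // => z _.
    by rewrite addr_ge0 ?expR_ge0.
  move=> e; rewrite /bern_prod /wt /en /nparticles.
  have F : forall z : Lam,
      (let p := expR (alpha z + lam) / (1 + expR (alpha z + lam)) in
       if e z then p else 1 - p) =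
      expR ((alpha z + lam) * (e z)%:R) / (1 + expR (alpha z + lam)).
    move=> z /=.
    have hpos : 1 + expR (alpha z + lam) != 0.
      by rewrite gt_eqF // addr_gt0 ?ltr01 ?expR_gt0.
    by case: (e z); rewrite ?mulr1 ?mulr0 ?expR0 //; field.
  rewrite (eq_bigr _ (fun z _ => F z)).
  rewrite big_split /= prodfV -expR_sum natr_sum mulr_sumr mulrA -expRD -big_split /=.
  by congr (expR _ / _); apply: eq_bigr => z _; rewrite mulrDl.
exists (fun n => if n == k then (\sum_(xi : config Lam | nparticles xi == k)
                                  gibbs_weight alpha xi)^-1 else 0).
split.
  move=> n; case: ifP => _ //; rewrite invr_ge0 sumr_ge0 // => xi _.
  exact: expR_ge0.
move=> e; rewrite /bern_canon /wt /gibbs_weight /en.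
by case: ifP => _; rewrite ?mulr0.
Qed.

Local Open Scope fset_scope.

Theorem lemma5p2 (R : realType) (B : R) (L : nat) (Lam : {fset int})
  (alpha : Lam -> R) (mu : config Lam -> R) (f : config Lam -> R) :
  0 <= B -> (2 <= L)%N ->
  (forall x : nat, (1 <= x <= L)%N -> (x%:Z \in Lam)) ->
  (forall z : Lam, `|alpha z| <= B) ->
  bernoulli_measure alpha mu ->
  integ mu (fun eta => (f (swapZ 1 L%:Z eta) - f eta) ^+ 2)
  <= expR (13 * B) * L%:R *
     \sum_(1 <= x < L)
        integ mu (fun eta => (f (swapZ x%:Z (x.+1)%:Z eta) - f eta) ^+ 2).
Proof.
move=> hB hL hLam hal hmu.
have [H [hH hmuE]] := bern_wt hmu.
have h1 : (1 <= 1 <= L)%N by lia.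
have hLL : (1 <= L <= L)%N by lia.
pose z1 : Lam := [` hLam 1%N h1]%fset.
pose zL : Lam := [` hLam L hLL]%fset.
have hz1 : val z1 = 1%N%:Z by [].
have hzL : val zL = L%:Z by [].
have hinv : Inv B L alpha alpha 1 L z1 zL.
  split; [exact: hal | by [] | exact: or_introl | exact: or_introl | ].
  move=> xi; rewrite !eqxx big1 => [|z _]; last by rewrite subrr mul0r.
  by rewrite !subrr !mul0r !addr0.
have hm := main_ind f hal hLam hH (n := (L - 2)%N) (l := 1%N) (r := L) (be := alpha)
  ltac:(lia) ltac:(lia) (leqnn 1) (leqnn L) hz1 hzL hinv.
have -> : integ mu (fun eta => (f (swapZ 1 L%:Z eta) - f eta) ^+ 2) =
          A H alpha f (1%N%:Z) (L%:Z).
  by rewrite /integ /A; apply: eq_bigr => e _; rewrite hmuE.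
have -> : \sum_(1 <= x < L)
        integ mu (fun eta => (f (swapZ x%:Z (x.+1)%:Z eta) - f eta) ^+ 2) =
        \sum_(1 <= b < L) A H alpha f (b%:Z) (b.+1%:Z).
  apply: eq_bigr => x _; rewrite /integ /A; apply: eq_bigr => e _; rewrite hmuE.
  done.
apply: (le_trans hm).
have hS : 0 <= \sum_(1 <= b < L) A H alpha f (b%:Z) (b.+1%:Z).
  by apply: sumr_ge0 => b _; apply: A_ge0.
apply: ler_wpM2r => //.
rewrite mulrC; apply: ler_pM; rewrite ?expR_ge0 ?ler0n //.
  by rewrite ler_expR; lra.
by rewrite ler_nat leq_subr.
Qed.
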